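(* For any finite alphabet $\mathfrak{G}$ and any $\mathfrak{G}$-trees $\mathfrak{s}$ and $\mathfrak{t}$ such that $\mathfrak{s}\preceq\mathfrak{t}$, in the $\mathfrak{G}$-prefix poset, $\#[\mathfrak{s},\mathfrak{t}] = \mathrm{ld}(\mathrm{sh}(\lozenge_{|\mathfrak{s}|}[\mathfrak{t}\setminus\mathfrak{s}]))$.
   Context: $\mathfrak{G}$ is a finite alphabet (letters with arities $\geq 1$). A $\mathfrak{G}$-tree is either the leaf (the tree with no internal node) or a root decorated by a letter $\mathtt{a}\in\mathfrak{G}$ with $|\mathtt{a}|$ children that are $\mathfrak{G}$-trees; $|\mathfrak{s}|$ is the number of leaves. The $\mathfrak{G}$-prefix poset is the set of $\mathfrak{G}$-trees ordered by $\mathfrak{s}\preceq\mathfrak{t}$ iff $\mathfrak{t}$ is obtained by grafting $\mathfrak{G}$-trees $\mathfrak{r}_1,\dots,\mathfrak{r}_{|\mathfrak{s}|}$ onto the leaves of $\mathfrak{s}$ (left to right); then $\mathfrak{t}\setminus\mathfrak{s} := (\mathfrak{r}_1,\dots,\mathfrak{r}_{|\mathfrak{s}|})$. $\lozenge_k[\mathfrak{r}_1,\dots,\mathfrak{r}_k]$ is the tree with root decorated by a new letter $\lozenge_k$ of arity $k$ and children $\mathfrak{r}_1,\dots,\mathfrak{r}_k$. A shadow is a finite (possibly empty) multiset of shadows. For a tree $\mathfrak{t}$ different from the leaf with root of arity $k$, $\mathrm{sh}(\mathfrak{t})$ is the multiset of the $\mathrm{sh}(\mathfrak{t}(i))$ over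 those $i\in[k]$ such that the $i$-th subtree $\mathfrak{t}(i)$ is not the leaf. The load of a shadow is defined recursively by $\mathrm{ld}(\{s_1,\dots,s_k\}) = \prod_{i\in[k]}(1+\mathrm{ld}(s_i))$ (so the empty shadow has load $1$). *)

(* Defs.v *)
From mathcomp Require Import all_boot.
Set Implicit Arguments. Unset Strict Implicit. Unset Printing Implicit Defensive.

Inductive tree (L : Type) : Type :=
| Leaf : tree L
| Node : L -> seq (tree L) -> tree L.
Arguments Leaf {L}.

Section Trees.
Variable L : Type.

Fixpoint wf (ar : L -> nat) (t : tree L) : bool :=
  match t with
  | Leaf => true
  | Node a ts => (size ts == ar a) &&
      (fix wfl (us : seq (tree L)) : bool :=
         match us with [::] => true | u :: us' => wf ar u && wfl us' end) ts
  end.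

Fixpoint nleaves (t : tree L) : nat :=
  match t with
  | Leaf => 1
  | Node _ ts =>
      (fix nl (us : seq (tree L)) : nat :=
         match us with [::] => 0 | u :: us' => nleaves u + nl us' end) ts
  end.

Fixpoint graft (t : tree L) (rs : seq (tree L)) : tree L :=
  match t with
  | Leaf => head Leaf rs
  | Node a ts => Node a
      ((fix gl (us : seq (tree L)) (rs : seq (tree L)) : seq (tree L) :=
          match us with
          | [::] => [::]
          | u :: us' => graft u (take (nleaves u) rs) :: gl us' (drop (nleaves u) rs)
          end) ts rs)
  end.

Definition is_leaf (t : tree L) : bool := if t is Leaf then true else false.

End Trees.

Definition prefix_le (L : Type) (ar : L -> nat) (s t : tree L) : Prop :=
  exists rs : seq (tree L),
    [/\ size rs = nleaves s, all (wf ar) rs & t = graft s rs].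

(* the family rs witnesses s ⪯ t and is t \ s *)
Definition is_diff (L : Type) (ar : L -> nat) (s t : tree L) (rs : seq (tree L)) : Prop :=
  [/\ size rs = nleaves s, all (wf ar) rs & t = graft s rs].

Definition card_is (L : Type) (A : tree L -> Prop) (n : nat) : Prop :=
  exists f : 'I_n -> tree L,
    injective f /\ (forall u, A u <-> exists i, f i = u).

Definition interval (L : Type) (ar : L -> nat) (s t : tree L) : tree L -> Prop :=
  fun u => wf ar u /\ prefix_le ar s u /\ prefix_le ar u t.

Fixpoint tmap (L L' : Type) (f : L -> L') (t : tree L) : tree L' :=
  match t with
  | Leaf => Leaf
  | Node a ts => Node (f a)
      ((fix ml (us : seq (tree L)) : seq (tree L') :=
          match us with [::] => [::] | u :: us' => tmap f u :: ml us' end) ts)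
  end.

(* ◊_k[r_1,...,r_k]: root decorated by a new letter (None) of arity k;
   the letters of G are embedded as Some a *)
Definition diamond (L : Type) (rs : seq (tree L)) : tree (option L) :=
  Node None (map (tmap Some) rs).

(* Shadows: finite multisets of shadows, represented by lists
   (all functions used on them are invariant under permutation) *)
Inductive shadow : Type := Sh : seq shadow -> shadow.

Fixpoint ld (s : shadow) : nat :=
  match s with
  | Sh ss => (fix pl (us : seq shadow) : nat :=
                match us with [::] => 1 | u :: us' => (1 + ld u) * pl us' end) ss
  end.

(* shadow of a tree (for the leaf, which is never used, we return the empty shadow) *)
Fixpoint sh (L : Type) (t : tree L) : shadow :=
  match t with
  | Leaf => Sh [::]
  | Node _ ts => Sh
      ((fix sl (us : seq (tree L)) : seq shadow :=
          match us with
          | [::] => [::]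
          | u :: us' => if is_leaf u then sl us' else sh u :: sl us'
          end) ts)
  end.

(* Main.v *)
From HB Require Import structures.
Require Import Defs.
From mathcomp Require Import all_boot.
Set Implicit Arguments. Unset Strict Implicit. Unset Printing Implicit Defensive.

Fixpoint allP (L : Type) (P : tree L -> Prop) (ts : seq (tree L)) : Prop :=
  if ts is u :: us then P u /\ allP P us else True.

Definition tree_ind2 (L : Type) (P : tree L -> Prop) (HL : P Leaf)
  (HN : forall a ts, allP P ts -> P (Node a ts)) : forall t, P t :=
  fix F t := match t with
  | Leaf => HL
  | Node a ts => HN a ts ((fix G ts : allP P ts := match ts as ts0 return allP P ts0 with
       | [::] => I | u :: us => conj (F u) (G us) end) ts)
  end.

Section Gen.
Variable L : Type.
Fixpoint graftl (us rs : seq (tree L)) : seq (tree L) :=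
  match us with
  | [::] => [::]
  | u :: us' => graft u (take (nleaves u) rs) :: graftl us' (drop (nleaves u) rs)
  end.
Lemma graftE a ts rs : graft (Node a ts) rs = Node a (graftl ts rs).
Proof. by []. Qed.
Lemma nleavesE (a : L) ts : nleaves (Node a ts) = sumn (map (@nleaves L) ts).
Proof. by elim: ts => //= u us <-. Qed.
Lemma wfE ar (a : L) ts : wf ar (Node a ts) = (size ts == ar a) && all (wf ar) ts.
Proof. rewrite /=; congr (_ && _); by elim: ts => //= u us ->. Qed.
Lemma shE (a : L) ts : sh (Node a ts) = Sh [seq sh u | u <- ts & ~~ is_leaf u].
Proof. rewrite /=; congr Sh; elim: ts => //= u us ->; by case: u. Qed.
Lemma ldE ss : ld (Sh ss) = foldr (fun u n => (1 + ld u) * n) 1 ss.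
Proof. by elim: ss => //= u us ->. Qed.
Lemma allP_in (P : tree L -> Prop) ts : allP P ts -> forall i, i < size ts -> P (nth Leaf ts i).
Proof. elim: ts => //= u us IH [Pu Pus] [|i] //= /IH; exact. Qed.
End Gen.
Lemma tmapE (L L' : Type) (f : L -> L') a ts : tmap f (Node a ts) = Node (f a) (map (tmap f) ts).
Proof. rewrite /=; congr Node; by elim: ts => //= u us ->. Qed.

Section Enc.
Variable T : countType.
Fixpoint enc (t : tree T) : GenTree.tree T := match t with
  | Leaf => GenTree.Node 0 [::]
  | Node a ts => GenTree.Node 1 (GenTree.Leaf a :: map enc ts) end.
Fixpoint dec (g : GenTree.tree T) : tree T := match g with
  | GenTree.Node 1 (GenTree.Leaf a :: gs) => Node a (map dec gs)
  | _ => Leaf end.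
Lemma encK : cancel enc dec.
Proof.
elim/tree_ind2 => //= a ts H; congr Node; elim: ts H => //= u us IH [-> /IH]. by rewrite -/(map dec _) => ->.
Qed.
End Enc.
HB.instance Definition _ (T : countType) := Countable.copy (tree T) (can_type (@encK T)).

Fixpoint prodseq (X : Type) (xss : seq (seq X)) : seq (seq X) :=
  if xss is xs :: xss' then [seq x :: ys | x <- xs, ys <- prodseq xss'] else [:: [::]].

Section PS.
Variable X : eqType.
Lemma mem_prodseq (xss : seq (seq X)) ys :
  (ys \in prodseq xss) = all2 (fun y xs => y \in xs) ys xss.
Proof.
elim: xss ys => [|xs xss IH] [|y ys] //=.
- by apply/allpairsP => -[[a b] [_ _]].
- apply/allpairsP/andP => [[[a b] /= [ha hb [-> ->]]]|[hy hys]].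
    by split; rewrite // -IH.
  by exists (y, ys); rewrite /= IH.
Qed.
Lemma size_prodseq (xss : seq (seq X)) :
  size (prodseq xss) = foldr (fun xs n => size xs * n) 1 xss.
Proof. by elim: xss => //= xs xss <-; rewrite size_allpairs. Qed.
Lemma uniq_prodseq (xss : seq (seq X)) : all uniq xss -> uniq (prodseq xss).
Proof.
elim: xss => //= xs xss IH /andP[u1 /IH u2].
apply: allpairs_uniq => // -[a b] [c d] _ _ /= [-> ->] //.
Qed.
End PS.

Lemma all2_cat (A B : Type) (r : A -> B -> bool) s1 s2 t1 t2 :
  size s1 = size t1 -> all2 r (s1 ++ s2) (t1 ++ t2) = all2 r s1 t1 && all2 r s2 t2.
Proof. elim: s1 t1 => [|a s1 IH] [|b t1] //= [/IH ->]; by rewrite andbA. Qed.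

Lemma all2_map (A B C : Type) (r : A -> C -> bool) (f : B -> C) s t :
  all2 r s (map f t) = all2 (fun a b => r a (f b)) s t.
Proof. by elim: s t => [|a s IH] [|b t] //=; rewrite IH. Qed.

Section Count.
Variable T : countType.
Variable ar : T -> nat.
Implicit Types (t u : tree T) (ts us rs qs : seq (tree T)).

Fixpoint pref (t : tree T) : seq (tree T) :=
  Leaf :: (if t is Node a ts then map (Node a) (prodseq (map pref ts)) else [::]).

Lemma size_graftl us rs : size (graftl us rs) = size us.
Proof. by elim: us rs => //= u us IH rs; rewrite IH. Qed.

Lemma Node_inj (a : T) : injective (Node a).
Proof. by move=> x y [->]. Qed.

Lemma graft_pref s qs rs : size qs = nleaves s -> size rs = nleaves s ->
  (graft s qs \in pref (graft s rs)) = all2 (fun q r => q \in pref r) qs rs.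
Proof.
elim/tree_ind2: s qs rs => [|a ss IH] qs rs.
  case: qs => [|q [|? ?]] //; case: rs => [|r [|? ?]] //= _ _; by rewrite andbT.
rewrite nleavesE !graftE /= in_cons /= (mem_map (@Node_inj a)) mem_prodseq all2_map.
elim: ss IH qs rs => [|s ss IHl] /=.
  by move=> _ [|] // [|].
move=> [IHs IHss] qs rs.
move=> hq hr.
have hq1 : size (take (nleaves s) qs) = nleaves s by rewrite size_takel // hq leq_addr.
have hr1 : size (take (nleaves s) rs) = nleaves s by rewrite size_takel // hr leq_addr.
rewrite IHs // IHl // ?size_drop ?hq ?hr ?addKn //.
by rewrite -all2_cat ?hq1 ?hr1 // !cat_take_drop.
Qed.

Lemma graft_inj s qs qs' : size qs = nleaves s -> size qs' = nleaves s ->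
  graft s qs = graft s qs' -> qs = qs'.
Proof.
elim/tree_ind2: s qs qs' => [|a ss IH] qs qs'.
  by case: qs => [|q [|? ?]] //; case: qs' => [|r [|? ?]] //= _ _ ->.
rewrite nleavesE !graftE => + + [].
elim: ss IH qs qs' => [|s ss IHl] /=.
  by move=> _ [|] // [|].
move=> [IHs IHss] qs qs'.
move=> hq hr [/IHs e1 /IHl e2].
have hq1 : size (take (nleaves s) qs) = nleaves s by rewrite size_takel // hq leq_addr.
have hr1 : size (take (nleaves s) qs') = nleaves s by rewrite size_takel // hr leq_addr.
rewrite -(cat_take_drop (nleaves s) qs) -(cat_take_drop (nleaves s) qs') e1 // e2 //.
  by rewrite size_drop hq addKn.
by rewrite size_drop hr addKn.
Qed.

Lemma uniq_pref t : uniq (pref t).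
Proof.
elim/tree_ind2: t => //= a ts IH.
rewrite map_inj_uniq ?andbT; last exact: Node_inj.
apply/andP; split; first by apply/mapP => -[].
apply: uniq_prodseq.
elim: ts IH => //= u us IHl [-> /IHl ->] //.
Qed.

Lemma all2_size (A B : Type) (r : A -> B -> bool) (x : seq A) (y : seq B) : all2 r x y -> size x = size y.
Proof. by elim: x y => [|a x IH] [|b y] //= /andP[_ /IH ->]. Qed.

Definition PA t := wf ar t -> forall u, (wf ar u /\ prefix_le ar u t) <-> u \in pref t.

Lemma LA1 us rs ts : allP PA ts -> ts = graftl us rs ->
  size rs = sumn (map (@nleaves T) us) -> all (wf ar) rs -> all (wf ar) us ->
  all (wf ar) ts -> all2 (fun u c => u \in pref c) us ts.
Proof.
elim: us rs ts => [|u us IH] rs ts; first by move=> _ ->.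
move=> Pts' ets; subst ts; move: Pts' => /= [Pt Pts] hr.
rewrite -{1}(cat_take_drop (nleaves u) rs) all_cat => /andP[hw1 hw2] /andP[wu wus] /andP[wt wts].
have hr1 : size (take (nleaves u) rs) = nleaves u by rewrite size_takel // hr leq_addr.
apply/andP; split.
  apply/(Pt wt); split => //; exists (take (nleaves u) rs); split => //.
by apply: (IH (drop (nleaves u) rs)) => //; rewrite size_drop hr addKn.
Qed.

Lemma LA2 us ts : allP PA ts -> all (wf ar) ts -> all2 (fun u c => u \in pref c) us ts ->
  all (wf ar) us /\ exists rs, [/\ size rs = sumn (map (@nleaves T) us), all (wf ar) rs &
     ts = graftl us rs].
Proof.
elim: us ts => [|u us IH] [|t ts] //=.
  by move=> _ _ _; split => //; exists [::].
move=> [Pt Pts] /andP[wt wts] /andP[ht hts].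
have [[wu [r1 [h1 w1 e1]]]] := (Pt wt u).2 ht.
have [wus [r2 [h2 w2 e2]]] := IH ts Pts wts hts.
split; first by rewrite wu.
exists (r1 ++ r2); split; first by rewrite size_cat h1 h2.
  by rewrite all_cat w1 w2.
by rewrite -h1 take_size_cat // drop_size_cat // -e1 -e2.
Qed.

Lemma prefA t : PA t.
Proof.
elim/tree_ind2: t => [|a ts IH] wt [|b us].
- split => // _; split => //; exists [:: Leaf]; split => //.
- split; last by rewrite inE => /eqP.
  by move=> [_ [rs [_ _ ]]]; rewrite graftE.
- split => // _; split => //; exists [:: Node a ts]; split => //; rewrite /all andbT; exact: wt.
- move: (wt); rewrite wfE => /andP[/eqP sz wts].
  split.
    move=> [wu [rs [hs hw]]]; rewrite graftE => -[<- ets].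
    rewrite /= in_cons /= (mem_map (@Node_inj a)) mem_prodseq all2_map.
    move: wu; rewrite wfE => /andP[_ wus].
    by apply: (LA1 IH ets) => //; rewrite -(nleavesE a).
  move=> hin; move: hin; rewrite /= in_cons /= => /mapP[x]; rewrite mem_prodseq all2_map => hx [-> ex].
  subst x.
  have [wus [rs [h1 h2 h3]]] := LA2 IH wts hx.
  split; first by change (wf ar (Node a us)); rewrite wfE wus (all2_size hx) sz eqxx.
  exists rs; split => //; rewrite ?graftE ?h3 ?(nleavesE a) //.
Qed.
End Count.

Lemma sh_tmap (L L' : Type) (f : L -> L') t : sh (tmap f t) = sh t /\ is_leaf (tmap f t) = is_leaf t.
Proof.
elim/tree_ind2: t => // a ts IH; rewrite tmapE !shE; split => //; congr Sh.
elim: ts IH => //= u us IHl [[e1 e2] /IHl e3]; rewrite e2; case: (is_leaf u) => //=; by rewrite e1 e3.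
Qed.

Lemma size_pref (T : countType) (t : tree T) :
  size (pref t) = if is_leaf t then 1 else 1 + ld (sh t).
Proof.
elim/tree_ind2: t => // a ts IH.
rewrite shE ldE /= size_map size_prodseq; congr S.
elim: ts IH => // u us IHl [e1 /IHl e2] /=; by rewrite e1 e2; case: (is_leaf u) => /=; rewrite ?mul1n.
Qed.

Theorem proposition3p12 (G : finType) (ar : G -> nat)
  (ar_pos : forall a : G, 0 < ar a)
  (s t : tree G) (rs : seq (tree G)) :
  wf ar s -> wf ar t -> is_diff ar s t rs ->
  card_is (interval ar s t) (ld (sh (diamond rs))).
Proof.
move=> wfs wft [hs hrs et].
set lst := map (graft s) (prodseq (map (@pref G) rs)).
have Hsz : size lst = ld (sh (diamond rs)).
  rewrite size_map size_prodseq /diamond shE ldE.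
  elim: (rs) => //= r rs' ->.
  have [e1 e2] := sh_tmap Some r.
  by rewrite e2 size_pref; case: (is_leaf r) => /=; rewrite ?mul1n ?e1.
have Hu : uniq lst.
  rewrite map_inj_in_uniq.
    apply: uniq_prodseq; elim: (rs) => //= r rs' ->; by rewrite uniq_pref.
  move=> x y; rewrite !mem_prodseq !all2_map => hx hy; apply: graft_inj.
    by rewrite (all2_size hx).
  by rewrite (all2_size hy).
have Hmem : forall u, interval ar s t u <-> u \in lst.
  move=> u; split.
    move=> [wfu [[qs [hq hqs eu]] hut]].
    have := (prefA wft u).1 (conj wfu hut).
    rewrite et eu graft_pref // => hall.
    by apply/mapP; exists qs => //; rewrite mem_prodseq all2_map.
  move=> /mapP[qs]; rewrite mem_prodseq all2_map => hqs eu.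
  have hq : size qs = nleaves s by rewrite (all2_size hqs).
  have hin : u \in pref t by rewrite et eu graft_pref.
  have [wfu hut] := (prefA wft u).2 hin.
  split => //; split => //; exists qs; split => //.
  elim: (qs) (rs) hqs hrs => [|q qs' IH] [|r rs'] //= /andP[h1 h2] /andP[w1 w2].
  rewrite (IH rs' h2 w2) andbT.
  by have [] := (prefA w1 q).2 h1.
rewrite -Hsz.
exists (fun i => nth Leaf lst i); split.
  move=> i j /eqP; rewrite nth_uniq // => /eqP; exact: val_inj.
move=> u; split.
  by move=> /Hmem /(nthP Leaf)[i hi <-]; exists (Ordinal hi).
by move=> [i <-]; apply/Hmem; apply: mem_nth.
Qed.
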